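(* Let $q\in X^*\setminus\{e\}$, let $q_0$ be the shortest word in $P_q$, and write $q=q_0^k\cdot\bar q$ with $\bar q\sqsubset q_0$ (so $k=\lfloor|q|/|q_0|\rfloor$). Then $\sqrt[*]{P_q}$ is a code having a delay of decipherability of at most $k+1$; that is, for all $w,w',v_1,\dots,v_{k+1}\in\sqrt[*]{P_q}$ and $u\in(\sqrt[*]{P_q})^*$, the relation $w\cdot v_1\cdots v_{k+1}\sqsubseteq w'\cdot u$ implies $w=w'$.
   Context: $X$ is a finite alphabet; $X^*$ the finite words (empty word $e$); $|w|$ is length; $w\sqsubseteq\eta$ means $w$ is a prefix of $\eta$, $w\sqsubset\eta$ a proper prefix. $P_q:=\{v: e\sqsubset v\sqsubseteq q\sqsubset v\cdot q\}$; $q_0$ is its shortest element. The star root is $\sqrt[*]{P_q}:=P_q\setminus(P_q^2\cdot P_q^* )$. A language $C$ is a code if $w_1\cdots w_l=v_1\cdots v_k$ with all $w_i,v_j\in C$ implies $l=k$ and $w_i=v_i$ for all $i$; it has delay of decipherability $m$ if for all $w,w',v_1,\dots,v_m\in C$ and $u\in C^*$, $w\cdot v_1\cdots v_m\sqsubseteq w'\cdot u$ implies $w=w'$. *)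

(* Defs.v *)
From mathcomp Require Import all_boot.
Set Implicit Arguments. Unset Strict Implicit. Unset Printing Implicit Defensive.

Section Words.
Variable T : finType.
Notation word := (seq T).

(* w ⊑ v : w is a prefix of v (mathcomp's [prefix]); w ⊏ v : proper prefix *)
Definition pprefix (w v : word) : bool := prefix w v && (size w < size v).

Definition Pq (q : word) (v : word) : Prop :=
  pprefix [::] v /\ prefix v q /\ pprefix q (v ++ q).

(* star root of a language L : L \ (L^2 · L^* ) *)
Definition star_root (L : word -> Prop) (v : word) : Prop :=
  L v /\ ~ (exists s : seq word, 2 <= size s /\ (forall x, x \in s -> L x) /\ flatten s = v).

Definition is_code (C : word -> Prop) : Prop :=
  forall ws vs : seq word, (forall x, x \in ws -> C x) -> (forall x, x \in vs -> C x) ->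
    flatten ws = flatten vs -> ws = vs.

Definition has_delay (m : nat) (C : word -> Prop) : Prop :=
  forall (w w' : word) (vs us : seq word),
    C w -> C w' -> size vs = m -> (forall x, x \in vs -> C x) ->
    (forall x, x \in us -> C x) ->
    prefix (w ++ flatten vs) (w' ++ flatten us) -> w = w'.
End Words.

(* Main.v *)
Require Import Defs.
From mathcomp Require Import all_boot.
Set Implicit Arguments. Unset Strict Implicit. Unset Printing Implicit Defensive.

From Stdlib Require Import Lia.
Ltac slia := repeat match goal with
 | H : is_true (_ <= _) |- _ => apply (elimT leP) in H; rewrite -?plusE -?minusE in H
 end;
 try (apply (introT leP)); rewrite -?plusE -?minusE; lia.

Section Aux.
Variable T : finType.
Variable x0 : T.

Lemma pre_nth (s t : seq T) i : prefix s t -> i < size s -> nth x0 t i = nth x0 s i.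
Proof. by move=> /prefixP[r ->] Hi; rewrite nth_cat Hi. Qed.

Lemma nth_pre (s t : seq T) : size s <= size t ->
  (forall i, i < size s -> nth x0 s i = nth x0 t i) -> prefix s t.
Proof.
move=> Hs H; rewrite prefixE; apply/eqP.
apply: (eq_from_nth (x0:=x0)); first by rewrite size_take_min (minn_idPl Hs).
by move=> i; rewrite size_take_min (minn_idPl Hs) => Hi; rewrite nth_take // H.
Qed.

Variable q : seq T.
Notation n := (size q).

Lemma Pq_period v i : Pq q v -> size v <= i < n -> nth x0 q i = nth x0 q (i - size v).
Proof.
move=> [_ [_ /andP[H _]]] /andP[Hvi Hi].
by rewrite -(pre_nth H Hi) nth_cat ltnNge Hvi.
Qed.

Lemma Pq_size v : Pq q v -> 0 < size v <= n.
Proof. by move=> [/andP[_ H1] [H2 _]]; rewrite H1 size_prefix. Qed.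

Lemma flatten_pre (V : seq (seq T)) : (forall x, x \in V -> Pq q x) ->
  prefix q (flatten V ++ q).
Proof.
elim: V => [|v V IH] HV /=; first exact: prefix_refl.
have [_ [_ /andP[Hv _]]] := HV v (mem_head _ _).
apply: (prefix_trans Hv); rewrite -catA.
have /prefixP[r ->] : prefix q (flatten V ++ q) by apply: IH => x Hx; apply: HV; rewrite inE Hx orbT.
by rewrite catA prefix_prefix.
Qed.

Lemma take_Pq d : 0 < d < n -> (forall i, d + i < n -> nth x0 q (d + i) = nth x0 q i) ->
  Pq q (take d q).
Proof.
move=> /andP[Hd0 Hdn] Hper; have Hs : size (take d q) = d by rewrite size_take Hdn.
split; first by rewrite /pprefix prefix0s Hs.
split; first exact: prefix_take.
rewrite /pprefix size_cat Hs -{1}(add0n n) ltn_add2r Hd0 andbT.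
apply: nth_pre; first by rewrite size_cat leq_addl.
move=> i Hi; rewrite nth_cat Hs; case: ltnP => Hid; first by rewrite nth_take.
by rewrite -{1}(subnKC Hid) Hper // subnKC.
Qed.

Lemma split_contra (u z : seq T) : Pq q u -> star_root (Pq q) z -> size u < size z ->
  (forall i, size z - size u + i < n -> nth x0 q (size z - size u + i) = nth x0 q i) -> False.
Proof.
move=> Hu [Hz Hnot] Hlt Hper.
set d := size z - size u.
have /andP[Hu0 Hun] := Pq_size Hu; have /andP[Hz0 Hzn] := Pq_size Hz.
have Hd : 0 < d < n.
  rewrite /d subn_gt0 Hlt /=; apply: leq_trans Hzn.
  by rewrite ltn_subrL Hu0 Hz0.
apply: Hnot; exists [:: u; take d q]; split => //; split.
  by move=> x; rewrite !inE => /orP[/eqP->|/eqP->] //; apply: take_Pq.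
have [_ [Hzq _]] := Hz; have [_ [Huq _]] := Hu.
have Hsd : size (take d q) = d by rewrite size_take (proj2 (andP Hd)).
apply: (eq_from_nth (x0:=x0)); first by rewrite /= cats0 size_cat Hsd /d subnKC // ltnW.
move=> i; rewrite /= cats0 size_cat Hsd => Hi.
rewrite -(pre_nth Hzq); last by rewrite -(subnKC (ltnW Hlt)).
rewrite nth_cat; case: ltnP => Hiu; first by rewrite (pre_nth Huq).
rewrite nth_take; last by rewrite ltn_subLR // addnC.
rewrite (Pq_period (i:=i) Hu) // Hiu /=.
apply: (leq_trans _ Hzn); apply: (leq_trans Hi); by rewrite /d subnKC // ltnW.
Qed.


Lemma core (w w' : seq T) (V U : seq (seq T)) :
  star_root (Pq q) w -> star_root (Pq q) w' ->
  (forall x, x \in V -> Pq q x) -> (forall x, x \in U -> Pq q x) ->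
  n <= size (flatten V) -> prefix (w ++ flatten V) (w' ++ flatten U) -> w = w'.
Proof.
move=> Hw Hw' HV HU HnV Hxy.
set V' := flatten V in HnV Hxy; set U' := flatten U in Hxy.
set a := size w; set b := size w'.
have HqV : prefix q V'.
  apply: nth_pre => // i Hi; rewrite -(pre_nth (flatten_pre HV) Hi) nth_cat.
  by rewrite (leq_trans Hi HnV).
have HqU := flatten_pre HU.
have Hsz := size_prefix Hxy; rewrite !size_cat -/a -/b in Hsz.
have H1 : forall i, i < n -> nth x0 (w' ++ U') (a + i) = nth x0 q i.
  move=> i Hi; rewrite (pre_nth Hxy); last by rewrite size_cat -/a ltn_add2l (leq_trans Hi HnV).
  rewrite nth_cat -/a ltnNge leq_addr /= addKn.
  by rewrite (pre_nth HqV).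
have H2 : forall i, i < n -> i < size U' -> nth x0 (w' ++ U') (b + i) = nth x0 q i.
  move=> i Hi HiU; rewrite nth_cat -/b ltnNge leq_addr /= addKn.
  by rewrite -(pre_nth HqU Hi) nth_cat HiU.
have Hs : n + a - b <= size U'.
  rewrite leq_subLR addnC; apply: (leq_trans _ Hsz); by rewrite leq_add2l.
have [_ [Hwq _]] := Hw.1; have [_ [Hw'q _]] := Hw'.1.
case: (ltngtP a b) => Hab.
- exfalso; apply: (split_contra Hw.1 Hw' Hab) => i Hi.
  rewrite -/a -/b in Hi *.
  rewrite -H1; last by slia.
  have -> : a + (b - a + i) = b + i by slia.
  by apply: H2; [slia | apply: (leq_trans _ Hs); slia].
- exfalso; apply: (split_contra Hw'.1 Hw Hab) => i Hi.
  rewrite -/a -/b in Hi *.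
  rewrite -(H1 i); last by slia.
  have -> : a + i = b + (a - b + i) by slia.
  by symmetry; apply: H2; [slia | apply: (leq_trans _ Hs); slia].
- move: Hwq Hw'q; rewrite !prefixE -/a -/b Hab => /eqP <- /eqP <-; done.
Qed.

Lemma size_flatten_ge (vs : seq (seq T)) m : (forall x, x \in vs -> m <= size x) ->
  size vs * m <= size (flatten vs).
Proof.
elim: vs => [|v vs IH] H //=.
rewrite mulSn size_cat leq_add //; first by apply: H; rewrite inE eqxx.
by apply: IH => x Hx; apply: H; rewrite inE Hx orbT.
Qed.

End Aux.

Lemma size_flatten_nseq (T : Type) k (s : seq T) : size (flatten (nseq k s)) = k * size s.
Proof. by elim: k => //= k IH; rewrite size_cat IH mulSn. Qed.


Theorem theorem2 (T : finType) (q q0 qbar : seq T) (k : nat) :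
  q != [::] ->
  Pq q q0 -> (forall v, Pq q v -> size q0 <= size v) ->
  q = flatten (nseq k q0) ++ qbar -> pprefix qbar q0 ->
  is_code (star_root (Pq q)) /\ has_delay k.+1 (star_root (Pq q)).
Proof.
move=> Hq Hq0 Hmin Hqdef Hqbar.
have [x0 _] : exists x : T, True by case: (q) Hq => [|x r] //; exists x.
have /andP[Hp0 _] := Pq_size Hq0.
have Hnne : forall v (vs : seq (seq T)), Pq q v -> [::] <> v ++ flatten vs.
  move=> v vs Hv /(congr1 size); rewrite size_cat /=.
  by have /andP[Hv0 _] := Pq_size Hv; case: (size v) Hv0.
have HVq : forall (ws : seq (seq T)), (forall x, x \in ws -> star_root (Pq q) x) ->
    forall x, x \in ws ++ nseq (size q) q0 -> Pq q x.
  move=> ws Hws x; rewrite mem_cat mem_nseq => /orP[/Hws []//|/andP[_ /eqP->]] //.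
have HVn : forall (ws : seq (seq T)), size q <= size (flatten (ws ++ nseq (size q) q0)).
  move=> ws; rewrite flatten_cat size_cat size_flatten_nseq.
  apply: leq_trans (leq_addl _ _); by rewrite leq_pmulr.
split.
- move=> ws; elim: ws => [|w ws IH] vs Hws Hvs Heq.
    case: vs Hvs Heq => [|v vs] // Hvs /= Heq; exfalso.
    by apply: (Hnne v vs (Hvs v (mem_head _ _)).1).
  case: vs Hvs Heq => [|v vs] Hvs /= Heq.
    by exfalso; apply: (Hnne w ws (Hws w (mem_head _ _)).1).
  have Hw := Hws w (mem_head _ _); have Hv := Hvs v (mem_head _ _).
  have Hws' : forall x, x \in ws -> star_root (Pq q) x.
    by move=> x Hx; apply: Hws; rewrite inE Hx orbT.
  have Hvs' : forall x, x \in vs -> star_root (Pq q) x.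
    by move=> x Hx; apply: Hvs; rewrite inE Hx orbT.
  have Hwv : w = v.
    apply: (core x0 Hw Hv (HVq _ Hws') (HVq _ Hvs') (HVn ws)).
    by rewrite !flatten_cat !catA Heq prefix_refl.
  subst v; congr (_ :: _); apply: IH => //.
  by have := congr1 (drop (size w)) Heq; rewrite !drop_size_cat.
- move=> w w' vs us Hw Hw' Hsz Hvs Hus Hpre.
  apply: (core x0 Hw Hw' (fun x Hx => (Hvs x Hx).1) (fun x Hx => (Hus x Hx).1) _ Hpre).
  have Hn : size q <= k.+1 * size q0.
    move: Hqbar => /andP[_ Hb].
    by rewrite {1}Hqdef size_cat size_flatten_nseq mulSnr leq_add2l ltnW.
  apply: (leq_trans Hn); rewrite -Hsz; apply: size_flatten_ge.
  by move=> x Hx; apply: Hmin; exact: (Hvs x Hx).1.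
Qed.
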